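(* Let $S$ be a finite set of points in the plane and let $\mathcal{F}$ be the family of halfplanes. Then the Delaunay-edges of $S$ with respect to $\mathcal{F}$ can be $2$-colored such that every halfplane that contains at least three Delaunay-edges contains two Delaunay-edges of different colors. Moreover, this statement is false if ''three'' is replaced by ''two'': there is a finite point set $S$ in the plane such that for every $2$-coloring of its Delaunay-edges with respect to halfplanes, some halfplane contains at least two Delaunay-edges, all of the same color.
   Context: For a finite point set $S$ and a family of regions $\mathcal{F}$, the Delaunay-edges of $S$ with respect to $\mathcal{F}$ are the $2$-element subsets $\{p,q\}\subseteq S$ for which there is $F\in\mathcal{F}$ with $S\cap F=\{p,q\}$. A region contains a Delaunay-edge if it contains both of its endpoints. *)

(* Defs.v *)
From HB Require Import structures.
From mathcomp Require Import all_boot all_order all_algebra.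
From mathcomp Require Import finmap.
From mathcomp Require Import reals.
Set Implicit Arguments. Unset Strict Implicit. Unset Printing Implicit Defensive.
Import Order.TTheory GRing.Theory Num.Theory.
Local Open Scope fset_scope.
Local Open Scope ring_scope.

Definition in_hp (R : realType) (a b c : R) (p : R * R) : bool :=
  a * p.1 + b * p.2 <= c.

Definition is_halfplane (R : realType) (a b c : R) : Prop := (a, b) != (0, 0).

Definition delaunay_edge (R : realType) (S e : {fset (R * R)}) : Prop :=
  e `<=` S /\ #|` e| = 2%N /\
  exists a b c : R, is_halfplane a b c /\
    forall x, x \in S -> (x \in e) = in_hp a b c x.

Definition hp_contains (R : realType) (a b c : R) (e : {fset (R * R)}) : Prop :=
  forall x, x \in e -> in_hp a b c x.

(* Main.v *)
Require Import Defs.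
From HB Require Import structures.
From mathcomp Require Import all_boot all_order all_algebra.
From mathcomp Require Import finmap.
From mathcomp Require Import reals.
From mathcomp Require Import ring lra.
From Stdlib Require Import ClassicalEpsilon Classical.
Set Implicit Arguments. Unset Strict Implicit. Unset Printing Implicit Defensive.
Import Order.TTheory GRing.Theory Num.Theory.
Local Open Scope fset_scope.
Local Open Scope ring_scope.

Definition nrm (R : realType) (v : R * R) := `|v.1| + `|v.2|.
Definition up (R : realType) (v : R * R) : bool := (0 < v.2) || ((v.2 == 0) && (0 < v.1)).
Definition gg (R : realType) (v : R * R) := v.1 / nrm v.
Definition PA (R : realType) (v : R * R) := if up v then 1 - gg v else 3 + gg v.
Definition md (R : realType) (t : R) := if t < 0 then t + 4 else t.
Definition cr (R : realType) (u v : R * R) := u.1 * v.2 - u.2 * v.1.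
Definition dt (R : realType) (u v : R * R) := u.1 * v.1 + u.2 * v.2.

Lemma nz_nrm (R : realType) (v : R * R) : v != (0,0) -> 0 < nrm v.
Proof.
case: v => a b /= h; rewrite /nrm /=.
have [ha|ha] := eqVneq a 0.
  subst a; have hb : b != 0 by apply: contraNneq h => ->.
  by rewrite normr0 add0r normr_gt0.
have : 0 < `|a| by rewrite normr_gt0.
have := normr_ge0 b; lra.
Qed.

Lemma gg_mul (R : realType) (v : R * R) : v != (0,0) -> gg v * nrm v = v.1.
Proof. move=> h; rewrite /gg mulfVK //; exact: lt0r_neq0 (nz_nrm h). Qed.

Lemma B_key (R : realType) (u v : R * R) : up u -> up v ->
  (gg u - gg v) * (nrm u * nrm v) = cr u v + (u.1 * `|v.1| - v.1 * `|u.1|).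
Proof.
case: u v => [u1 u2] [v1 v2]; rewrite /up /= => hu hv.
have hu2 : 0 <= u2 by case/orP: hu => [/ltW//|/andP[/eqP-> _]].
have hv2 : 0 <= v2 by case/orP: hv => [/ltW//|/andP[/eqP-> _]].
have nu : (u1, u2) != (0,0).
  apply/negP => /eqP [e1 e2]; move: hu; rewrite e1 e2 ltxx /=; by rewrite andbF.
have nv : (v1, v2) != (0,0).
  apply/negP => /eqP [e1 e2]; move: hv; rewrite e1 e2 ltxx /=; by rewrite andbF.
have gu := gg_mul nu; have gv := gg_mul nv.
move: gu gv; rewrite /nrm /cr /= (ger0_norm hu2) (ger0_norm hv2) => gu gv.
rewrite mulrBl.
have -> : gg (u1, u2) * ((`|u1| + u2) * (`|v1| + v2)) = u1 * (`|v1| + v2) by rewrite mulrA gu.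
have -> : gg (v1, v2) * ((`|u1| + u2) * (`|v1| + v2)) = v1 * (`|u1| + u2) by rewrite mulrCA gv mulrC.
ring.
Qed.

Lemma up_le (R : realType) (u : R * R) : up u -> 0 <= u.2 /\ (u.2 = 0 -> 0 < u.1).
Proof.
rewrite /up; case/orP => [h|/andP[/eqP h1 h]].
  by split => [|h2]; lra.
by split => [|_]; lra.
Qed.

Lemma X_sign (R : realType) (u v : R * R) : up u -> up v ->
  let X := u.1 * `|v.1| - v.1 * `|u.1| in
  [/\ 0 < cr u v -> 0 < cr u v + X, cr u v < 0 -> cr u v + X < 0 &
      cr u v = 0 -> X = 0].
Proof.
case: u v => [u1 u2] [v1 v2] /up_le [hu2 hu] /up_le [hv2 hv] /=; rewrite /cr /=.
move: hu2 hv2 hu hv => /= hu2 hv2 hu hv.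
have [a1|a1] := lerP 0 u1; have [b1|b1] := lerP 0 v1;
  rewrite ?(ger0_norm a1) ?(ltr0_norm a1) ?(ger0_norm b1) ?(ltr0_norm b1).
- by split => *; nra.
- have v2p : 0 < v2. case: (ltrP 0 v2) => h; first done. exfalso. have e : v2 = 0 by lra. have := hv e; lra.
  by split => *; nra.
- have u2p : 0 < u2. case: (ltrP 0 u2) => h; first done. exfalso. have e : u2 = 0 by lra. have := hu e; lra.
  by split => *; nra.
- by split => *; nra.
Qed.

Definition opp (R : realType) (v : R * R) : R * R := (- v.1, - v.2).

Lemma gg_bounds (R : realType) (v : R * R) : v != (0,0) ->
  [/\ -1 <= gg v, gg v <= 1, up v -> -1 < gg v & ~~ up v -> gg v < 1].
Proof.
move=> nz; have hn := nz_nrm nz; have hg := gg_mul nz.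
move: hn hg; rewrite /nrm /up; case: v nz => v1 v2 /= nz hn hg.
have hnz : v2 = 0 -> v1 != 0.
  by move=> e; apply: contraNneq nz => e1; rewrite e e1.
have [a1|a1] := lerP 0 v1; have [b1|b1] := lerP 0 v2;
  move: hn hg; rewrite ?(ger0_norm a1) ?(ltr0_norm a1) ?(ger0_norm b1) ?(ltr0_norm b1) => hn hg;
  (split; [nra|nra| |]).
all: first [ case/orP => [h|/andP[/eqP e h]]; [nra| rewrite e in hg hn *; nra]
           | move=> /norP [h1 h2]; rewrite -leNgt in h1; case/nandP: h2 => h2;
             [have h3 : v2 < 0 by rewrite lt_neqAle h2 h1
             | rewrite -leNgt in h2; have [e|ne] := eqVneq v2 0;
               [have h4 := hnz e; have h5 : v1 < 0 by rewrite lt_neqAle h4 h2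
               | have h5 : v2 < 0 by rewrite lt_neqAle ne h1]]; nra ].
Qed.

Lemma opp_nz (R : realType) (v : R * R) : v != (0,0) -> opp v != (0,0).
Proof.
case: v => a b; rewrite /opp /=; apply: contra => /eqP [ha hb].
by apply/eqP; congr pair; [rewrite -(opprK a) ha oppr0 | rewrite -(opprK b) hb oppr0].
Qed.

Lemma up_opp (R : realType) (v : R * R) : v != (0,0) -> up (opp v) = ~~ up v.
Proof.
case: v => a b nz; rewrite /up /opp /= oppr_gt0 oppr_eq0 oppr_gt0.
have [hb|hb|hb] := ltrgtP b 0.
- by [].
- by [].
- subst b; rewrite /=.
  have ha : a != 0 by apply: contraNneq nz => ->; done.
  by case: (ltrgtP a 0) ha => // _ _.
Qed.

Lemma gg_opp (R : realType) (v : R * R) : gg (opp v) = - gg v.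
Proof. by rewrite /gg /nrm /opp /= !normrN mulNr. Qed.

Lemma PA_range (R : realType) (v : R * R) : v != (0,0) -> 0 <= PA v < 4.
Proof.
move=> nz; have [h1 h2 h3 h4] := gg_bounds nz; rewrite /PA.
case: ifP => h; [have := h3 h | have := h4 (negbT h)]; move=> *; apply/andP; split; lra.
Qed.

Lemma PA_up (R : realType) (v : R * R) : v != (0,0) -> up v -> PA v < 2.
Proof. move=> nz h; have [h1 h2 h3 h4] := gg_bounds nz; rewrite /PA h; have := h3 h; lra. Qed.

Lemma PA_down (R : realType) (v : R * R) : v != (0,0) -> ~~ up v ->
  PA v = PA (opp v) + 2.
Proof.
move=> nz h; rewrite /PA (negbTE h) up_opp // h gg_opp; lra.
Qed.

Lemma cr_oppl (R : realType) (u v : R * R) : cr (opp u) v = - cr u v.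
Proof. rewrite /cr /opp /=; ring. Qed.
Lemma cr_oppr (R : realType) (u v : R * R) : cr u (opp v) = - cr u v.
Proof. rewrite /cr /opp /=; ring. Qed.
Lemma dt_oppl (R : realType) (u v : R * R) : dt (opp u) v = - dt u v.
Proof. rewrite /dt /opp /=; ring. Qed.
Lemma dt_oppr (R : realType) (u v : R * R) : dt u (opp v) = - dt u v.
Proof. rewrite /dt /opp /=; ring. Qed.

Lemma B_up (R : realType) (u v : R * R) : u != (0,0) -> v != (0,0) -> up u -> up v ->
  [/\ 0 < cr u v -> 0 < PA v - PA u < 2, cr u v < 0 -> -2 < PA v - PA u < 0 &
      cr u v = 0 -> PA v = PA u /\ 0 < dt u v].
Proof.
move=> nu nv hu hv.
have key := B_key hu hv. have [X1 X2 X3] := X_sign hu hv.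
have [gu1 gu2 gu3 _] := gg_bounds nu; have [gv1 gv2 gv3 _] := gg_bounds nv.
have := gu3 hu; have := gv3 hv => gu gv.
have N : 0 < nrm u * nrm v by apply: mulr_gt0; apply: nz_nrm.
rewrite /PA hu hv; split.
- move=> c; have := X1 c; rewrite -key => k.
  have : 0 < gg u - gg v by rewrite -(pmulr_lgt0 _ N).
  move=> *; apply/andP; split; lra.
- move=> c; have := X2 c; rewrite -key => k.
  have : gg u - gg v < 0 by rewrite -(pmulr_llt0 _ N).
  move=> *; apply/andP; split; lra.
- move=> c; have x := X3 c; rewrite c x addr0 in key.
  have e : gg u - gg v = 0 by move/eqP: key; rewrite mulf_eq0 (gt_eqF N) orbF => /eqP.
  split; first lra.
  clear -c hu hv nu nv.
  move: c hu hv nu nv; case: u => u1 u2; case: v => v1 v2; rewrite /cr /dt /up /=.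
  move=> c hu hv nu nv.
  case/orP: hu => [hu|/andP[/eqP e2 hu]]; case/orP: hv => [hv|/andP[/eqP e3 hv]].
  + have h : u2 * (u1 * v1 + u2 * v2) - v2 * (u1 ^+ 2 + u2 ^+ 2) = - u1 * (u1 * v2 - u2 * v1) by ring.
    rewrite c mulr0 in h; move/eqP: h; rewrite subr_eq0 => /eqP h.
    have h2 : 0 < v2 * (u1 ^+ 2 + u2 ^+ 2).
      apply: mulr_gt0 => //; have := sqr_ge0 u1; have : 0 < u2 ^+ 2 by rewrite exprn_gt0. lra.
    by rewrite -h pmulr_rgt0 in h2.
  + subst v2; nra.
  + subst u2; nra.
  + subst; nra.
Qed.

Lemma C_lem (R : realType) (u v : R * R) : u != (0,0) -> v != (0,0) ->
  [/\ 0 < cr u v -> 0 < md (PA v - PA u) < 2,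
      cr u v < 0 -> 2 < md (PA v - PA u) < 4 &
      cr u v = 0 -> (md (PA v - PA u) = 0 /\ 0 < dt u v) \/
                    (md (PA v - PA u) = 2 /\ dt u v < 0)].
Proof.
move=> nu nv; rewrite /md.
have [hu|hu] := boolP (up u); have [hv|hv] := boolP (up v).
- have [B1 B2 B3] := B_up nu nv hu hv.
  split.
  + move=> c; have /andP[] := B1 c => *; case: ifP => h; apply/andP; split; lra.
  + move=> c; have /andP[] := B2 c => *; case: ifP => h; apply/andP; split; lra.
  + move=> c; have [e d] := B3 c; left; rewrite e subrr ltxx; done.
- have nv' := opp_nz nv; have hv' : up (opp v) by rewrite up_opp.
  have [B1 B2 B3] := B_up nu nv' hu hv'.
  rewrite cr_oppr dt_oppr in B1 B2 B3; rewrite (PA_down nv hv).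
  split => c.
  + have c' : - cr u v < 0 by lra.
    have /andP[] := B2 c' => *; case: ifP => h; apply/andP; split; lra.
  + have c' : 0 < - cr u v by lra.
    have /andP[] := B1 c' => *; case: ifP => h; apply/andP; split; lra.
  + have c' : - cr u v = 0 by rewrite c oppr0.
    have [e d] := B3 c'; right; rewrite e; split; last by lra.
    case: ifP => h; lra.
- have nu' := opp_nz nu; have hu' : up (opp u) by rewrite up_opp.
  have [B1 B2 B3] := B_up nu' nv hu' hv.
  rewrite cr_oppl dt_oppl in B1 B2 B3; rewrite (PA_down nu hu).
  split => c.
  + have c' : - cr u v < 0 by lra.
    have /andP[] := B2 c' => *; case: ifP => h; apply/andP; split; lra.
  + have c' : 0 < - cr u v by lra.
    have /andP[] := B1 c' => *; case: ifP => h; apply/andP; split; lra.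
  + have c' : - cr u v = 0 by rewrite c oppr0.
    have [e d] := B3 c'; right; rewrite e; split; last by lra.
    case: ifP => h; lra.
- have nu' := opp_nz nu; have hu' : up (opp u) by rewrite up_opp.
  have nv' := opp_nz nv; have hv' : up (opp v) by rewrite up_opp.
  have [B1 B2 B3] := B_up nu' nv' hu' hv'.
  rewrite cr_oppl cr_oppr dt_oppl dt_oppr opprK in B1 B2 B3.
  rewrite (PA_down nu hu) (PA_down nv hv).
  split => c.
  + have /andP[] := B1 c => *; case: ifP => h; apply/andP; split; lra.
  + have /andP[] := B2 c => *; case: ifP => h; apply/andP; split; lra.
  + have [e d] := B3 c; left; rewrite e; split; last by lra.
    case: ifP => h; lra.
Qed.

Lemma md_rel (R : realType) (pa pu pv : R) : 0 <= pa < 4 -> 0 <= pu < 4 -> 0 <= pv < 4 ->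
  md (pu - pa) <= md (pv - pa) < 2 -> md (pv - pu) = md (pv - pa) - md (pu - pa).
Proof.
rewrite /md => /andP[? ?] /andP[? ?] /andP[? ?].
by case: ifP => h1; case: ifP => h2; case: ifP => h3; move=> /andP[? ?]; lra.
Qed.

Lemma sq_pos (R : realType) (a : R * R) : a != (0,0) -> 0 < a.1 ^+ 2 + a.2 ^+ 2.
Proof.
case: a => a1 a2 na /=; rewrite lt_neqAle addr_ge0 ?sqr_ge0 // andbT eq_sym.
apply: contra na; rewrite paddr_eq0 ?sqr_ge0 // !sqrf_eq0 => /andP[/eqP-> /eqP->] //.
Qed.

Lemma ConeP (R : realType) (a u v : R * R) : a != (0,0) -> u != (0,0) -> v != (0,0) ->
  md (PA u - PA a) <= md (PA v - PA a) < 2 ->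
  exists al be : R, [/\ 0 <= al, 0 <= be, 0 < al + be &
     u = (al * a.1 + be * v.1, al * a.2 + be * v.2)].
Proof.
move=> na nu nv hd.
have [C1 C2 C3] := C_lem na nu.
have [D1 D2 D3] := C_lem na nv.
have [E1 E2 E3] := C_lem nu nv.
have rel := md_rel (PA_range na) (PA_range nu) (PA_range nv) hd.
move/andP: hd => [hd1 hd2].
have N2 := sq_pos na.
have [c|c|c] := ltrgtP (cr a u) 0.
- have /andP[] := C2 c; lra.
- have /andP[d1 d1'] := C1 c.
  have cav : 0 < cr a v.
    have [c2|c2|c2] := ltrgtP (cr a v) 0; [exfalso|done|exfalso].
    + have /andP[] := D2 c2; lra.
    + case: (D3 c2) => [[e _]|[e _]]; lra.
  have cuv : 0 <= cr u v.
    have [c3|c3|c3] := ltrgtP (cr u v) 0; [exfalso|done|done].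
    have /andP[] := E2 c3; lra.
  exists (cr u v / cr a v), (cr a u / cr a v); split.
  + by apply: divr_ge0 => //; apply: ltW.
  + by apply: divr_ge0 => //; apply: ltW.
  + by rewrite -mulrDl; apply: divr_gt0 => //; lra.
  + clear -c cav cuv; move: c cav cuv; case: a => a1 a2; case: u => u1 u2;
    case: v => v1 v2; rewrite /cr /= => c cav cuv.
    have cz : a1 * v2 - a2 * v1 != 0 by apply: lt0r_neq0.
    by congr pair; field.
- case: (C3 c) => [[e d]|[e d]]; last by lra.
  exists (dt a u / (a.1 ^+ 2 + a.2 ^+ 2)), 0; split.
  + by apply: divr_ge0 => //; apply: ltW.
  + done.
  + by rewrite addr0; apply: divr_gt0.
  + clear -c d N2; move: c d N2; case: a => a1 a2; case: u => u1 u2;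
    rewrite /cr /dt /= => c d N2.
    have Nz : a1 ^+ 2 + a2 ^+ 2 != 0 by apply: lt0r_neq0.
    have h1 : u1 * (a1 ^+ 2 + a2 ^+ 2) - (a1 * u1 + a2 * u2) * a1 = - a2 * (a1 * u2 - a2 * u1) by ring.
    have h2 : u2 * (a1 ^+ 2 + a2 ^+ 2) - (a1 * u1 + a2 * u2) * a2 = a1 * (a1 * u2 - a2 * u1) by ring.
    rewrite c mulr0 ?oppr0 in h1; rewrite c mulr0 in h2; move/eqP: h1; rewrite subr_eq0 => /eqP h1.
    move/eqP: h2; rewrite subr_eq0 => /eqP h2.
    rewrite !mul0r !addr0; congr pair; rewrite mulrAC; [rewrite -h1 | rewrite -h2]; by rewrite mulfK.
Qed.

Definition dotp (R : realType) (d p : R * R) := d.1 * p.1 + d.2 * p.2.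

Definition sep (R : realType) (S e : {fset (R * R)}) (d : R * R) :=
  forall p q, p \in S -> q \in S -> p \in e -> q \notin e -> dotp d p < dotp d q.

Definition rep (R : realType) (S e : {fset (R * R)}) : R * R :=
  epsilon (inhabits (1, 0)) (fun d => d != (0,0) /\ sep S e d).

Lemma rep_spec (R : realType) (S e : {fset (R * R)}) : delaunay_edge S e ->
  rep S e != (0,0) /\ sep S e (rep S e).
Proof.
move=> [sub [card [a [b [c [hp he]]]]]].
apply: (epsilon_spec (inhabits (1,0)) (fun d => d != (0,0) /\ sep S e d)).
exists (a, b); split => // p q pS qS pe qe.
rewrite /dotp /=; move: (he p pS) (he q qS); rewrite pe (negbTE qe) /in_hp.
by move=> /esym h1 /esym /negbT; rewrite -ltNge => h2; apply: le_lt_trans h2.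
Qed.

Lemma sub_eq (R : realType) (A B : {fset (R * R)}) : A `<=` B -> #|` A| = #|` B| -> A = B.
Proof. by move=> s c; apply/eqP; rewrite eqEfcard s c leqnn. Qed.

Lemma sep_unique (R : realType) (S e e' : {fset (R * R)}) d :
  delaunay_edge S e -> delaunay_edge S e' -> sep S e d -> sep S e' d -> e = e'.
Proof.
move=> [s1 [c1 _]] [s2 [c2 _]] h1 h2.
have [sub|] := boolP (e `<=` e'); first by apply: sub_eq => //; rewrite c1 c2.
move/fsubsetPn => [p pe pe'].
suff sub : e' `<=` e by have E := sub_eq sub (etrans c2 (esym c1)); move: pe'; rewrite E pe.
apply/fsubsetP => q qe'; apply/negPn/negP => qe.
have pS : p \in S by apply: (fsubsetP s1).
have qS : q \in S by apply: (fsubsetP s2).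
have := h1 p q pS qS pe qe; have := h2 q p qS pS qe' pe'; lra.
Qed.

Lemma par_pos (R : realType) (a u : R * R) : a != (0,0) -> cr a u = 0 ->
  u = ((dt a u / (a.1 ^+ 2 + a.2 ^+ 2)) * a.1, (dt a u / (a.1 ^+ 2 + a.2 ^+ 2)) * a.2).
Proof.
move=> na; have N2 := sq_pos na; move: N2; case: a na => a1 a2; case: u => u1 u2 /= na N2.
rewrite /cr /dt /= => c.
have Nz : a1 ^+ 2 + a2 ^+ 2 != 0 by apply: lt0r_neq0.
have h1 : u1 * (a1 ^+ 2 + a2 ^+ 2) - (a1 * u1 + a2 * u2) * a1 = - a2 * (a1 * u2 - a2 * u1) by ring.
have h2 : u2 * (a1 ^+ 2 + a2 ^+ 2) - (a1 * u1 + a2 * u2) * a2 = a1 * (a1 * u2 - a2 * u1) by ring.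
rewrite c mulr0 ?oppr0 in h1; rewrite c mulr0 in h2; move/eqP: h1; rewrite subr_eq0 => /eqP h1.
move/eqP: h2; rewrite subr_eq0 => /eqP h2.
congr pair; rewrite mulrAC; [rewrite -h1 | rewrite -h2]; by rewrite mulfK.
Qed.

Lemma sep_scale (R : realType) (S e : {fset (R * R)}) (k : R) (d : R * R) : 0 < k ->
  sep S e (k * d.1, k * d.2) -> sep S e d.
Proof.
move=> kp h p q pS qS pe qe; have := h p q pS qS pe qe; rewrite /dotp /=.
have -> : k * d.1 * p.1 + k * d.2 * p.2 = k * (d.1 * p.1 + d.2 * p.2) by ring.
have -> : k * d.1 * q.1 + k * d.2 * q.2 = k * (d.1 * q.1 + d.2 * q.2) by ring.
by rewrite ltr_pM2l.
Qed.

Definition key (R : realType) (S e : {fset (R * R)}) := PA (rep S e).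

Lemma key_inj (R : realType) (S e e' : {fset (R * R)}) :
  delaunay_edge S e -> delaunay_edge S e' -> key S e = key S e' -> e = e'.
Proof.
move=> de de' hk; have [n1 s1] := rep_spec de; have [n2 s2] := rep_spec de'.
have [C1 C2 C3] := C_lem n1 n2; rewrite /key in hk; rewrite hk subrr /md ltxx in C1 C2 C3.
have c : cr (rep S e) (rep S e') = 0.
  have [c|c|c] := ltrgtP (cr (rep S e) (rep S e')) 0 => //.
  + by exfalso; move: (C2 c); clear; lra.
  + by exfalso; move: (C1 c); clear; lra.
have [[_ d]|[d _]] := C3 c; last by exfalso; move: d; clear; lra.
have N2 := sq_pos n1.
move: s2; rewrite (par_pos n1 c) => s2.
by apply: sep_unique de de' s1 (sep_scale _ s2); apply: divr_gt0.
Qed.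

Lemma seg (R : realType) (S g b : {fset (R * R)}) (a0 b0 c0 al be : R) :
  delaunay_edge S g -> delaunay_edge S b -> hp_contains a0 b0 c0 g ->
  0 <= al -> 0 <= be -> 0 < al + be ->
  rep S b = (al * a0 + be * (rep S g).1, al * b0 + be * (rep S g).2) ->
  hp_contains a0 b0 c0 b.
Proof.
move=> dg db hg al0 be0 ab rb q qb; apply/negPn/negP => qH.
have [_ sg] := rep_spec dg; have [_ sb] := rep_spec db.
have qg : q \notin g by apply/negP => /hg; apply/negP.
have [sub|] := boolP (g `<=` b).
  have E : g = b by apply: sub_eq => //; case: dg => _ [-> _]; case: db => _ [-> _].
  by move: qg; rewrite E qb.
move/fsubsetPn => [p pg pb].
have pS : p \in S by case: dg => /fsubsetP s _; apply: s.
have qS : q \in S by case: db => /fsubsetP s _; apply: s.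
have h1 := sb q p qS pS qb pb.
have h2 := sg p q pS qS pg qg.
have h3 := hg p pg.
move: h1 h2 h3 qH; rewrite rb /dotp /in_hp /= -ltNge.
set g1 := (rep S g).1; set g2 := (rep S g).2 => h1 h2 h3 h4.
have A : 0 < (a0 * q.1 + b0 * q.2) - (a0 * p.1 + b0 * p.2) by lra.
have B : 0 < (g1 * q.1 + g2 * q.2) - (g1 * p.1 + g2 * p.2) by lra.
have E : (al * a0 + be * g1) * q.1 + (al * b0 + be * g2) * q.2 -
         ((al * a0 + be * g1) * p.1 + (al * b0 + be * g2) * p.2) =
         al * ((a0 * q.1 + b0 * q.2) - (a0 * p.1 + b0 * p.2)) +
         be * ((g1 * q.1 + g2 * q.2) - (g1 * p.1 + g2 * p.2)) by ring.
have : 0 < al * ((a0 * q.1 + b0 * q.2) - (a0 * p.1 + b0 * p.2)) +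
         be * ((g1 * q.1 + g2 * q.2) - (g1 * p.1 + g2 * p.2)) by nra.
lra.
Qed.

Lemma allin (R : realType) (S g : {fset (R * R)}) (a0 b0 c0 k : R) :
  delaunay_edge S g -> hp_contains a0 b0 c0 g -> k < 0 ->
  rep S g = (k * a0, k * b0) -> forall x, x \in S -> in_hp a0 b0 c0 x.
Proof.
move=> dg hg kn rg x xS.
have [xg|xg] := boolP (x \in g); first exact: hg.
have [_ sg] := rep_spec dg.
have [E|[p pg]] := fset_0Vmem g.
  by exfalso; case: dg => _ [c _]; move: c; rewrite E cardfs0.
have pS : p \in S by case: dg => /fsubsetP s _; apply: s.
have h1 := sg p x pS xS pg xg; have h2 := hg p pg.
move: h1 h2; rewrite rg /dotp /in_hp /= => h1 h2.
have E1 : k * a0 * p.1 + k * b0 * p.2 = k * (a0 * p.1 + b0 * p.2) by ring.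
have E2 : k * a0 * x.1 + k * b0 * x.2 = k * (a0 * x.1 + b0 * x.2) by ring.
rewrite E1 E2 ltr_nM2l // in h1. lra.
Qed.

Lemma GB (R : realType) (S g b : {fset (R * R)}) (a0 b0 c0 : R) :
  (a0, b0) != (0,0) -> delaunay_edge S g -> delaunay_edge S b ->
  hp_contains a0 b0 c0 g -> ~ hp_contains a0 b0 c0 b ->
  [/\ md (key S g - PA (a0, b0)) <> 2,
      md (key S g - PA (a0, b0)) < 2 -> md (key S g - PA (a0, b0)) < md (key S b - PA (a0, b0)) &
      2 < md (key S g - PA (a0, b0)) -> 0 < md (key S b - PA (a0, b0)) < md (key S g - PA (a0, b0))].
Proof.
move=> n0 dg db hg hb.
have [ng sg] := rep_spec dg; have [nb sb] := rep_spec db.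
rewrite /key.
have r0 := PA_range n0; have rg := PA_range ng; have rb := PA_range nb.
split.
- move=> e2.
  have [C1 C2 C3] := C_lem n0 ng.
  have c : cr (a0, b0) (rep S g) = 0.
    have [c|c|c] := ltrgtP (cr (a0, b0) (rep S g)) 0 => //.
    + by exfalso; move: (C2 c) e2; clear; lra.
    + by exfalso; move: (C1 c) e2; clear; lra.
  have [[e d]|[_ d]] := C3 c; first by move: e e2; clear; lra.
  have N2 := sq_pos n0.
  have E := par_pos n0 c.
  apply: hb => x xb; apply: (allin dg hg _ E).
    by rewrite pmulr_llt0 // invr_gt0.
  by case: db => /fsubsetP s _; apply: s.
- move=> lt2; rewrite ltNge; apply/negP => le.
  have := @ConeP R (a0, b0) (rep S b) (rep S g) n0 nb ng.
  case; first by apply/andP; split.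
  move=> al [be [al0 be0 ab E]].
  by apply: hb; apply: (seg dg db hg al0 be0 ab).
- move=> gt2; apply/andP; split; rewrite ltNge; apply/negP => le.
  + have := @ConeP R (rep S g) (rep S b) (a0, b0) ng nb n0.
    case.
      move: le gt2 r0 rg rb; rewrite /md; clear.
      by case: ifP => h1; case: ifP => h2; case: ifP => h3; case: ifP => h4; move=> *; apply/andP; split; lra.
    move=> al [be [al0 be0 ab E]].
    apply: hb; apply: (seg dg db hg be0 al0); first by rewrite addrC.
    by rewrite E /=; congr pair; ring.
  + have := @ConeP R (rep S g) (rep S b) (a0, b0) ng nb n0.
    case.
      move: le gt2 r0 rg rb; rewrite /md; clear.
      by case: ifP => h1; case: ifP => h2; case: ifP => h3; case: ifP => h4; move=> *; apply/andP; split; lra.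
    move=> al [be [al0 be0 ab E]].
    apply: hb; apply: (seg dg db hg be0 al0); first by rewrite addrC.
    by rewrite E /=; congr pair; ring.
Qed.

Definition GBc (R : realType) (dz du : R) :=
  [/\ dz <> 2, dz < 2 -> dz < du & 2 < dz -> 0 < du < dz].

Lemma md_neg (R : realType) (t : R) : t < 0 -> md t = t + 4.
Proof. by rewrite /md => ->. Qed.
Lemma md_nn (R : realType) (t : R) : 0 <= t -> md t = t.
Proof. by rewrite /md ltNge => ->. Qed.

Lemma GBc_split (R : realType) (dx dw dw' dy : R) :
  GBc dx dw -> GBc dx dw' -> GBc dy dw -> GBc dy dw' ->
  ([/\ dx < 2, dx < dw & dx < dw'] \/ [/\ 2 < dx, 0 < dw, dw < dx, 0 < dw' & dw' < dx]) /\
  ([/\ dy < 2, dy < dw & dy < dw'] \/ [/\ 2 < dy, 0 < dw, dw < dy, 0 < dw' & dw' < dy]).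
Proof.
move=> [x2 xa xb] [_ xa' xb'] [y2 ya yb] [_ ya' yb']; split.
- case: (ltrgtP dx 2) => h; last by [].
  + by left; split => //; [apply: xa | apply: xa'].
  + have /andP[? ?] := xb h; have /andP[? ?] := xb' h; by right; split.
- case: (ltrgtP dy 2) => h; last by [].
  + by left; split => //; [apply: ya | apply: ya'].
  + have /andP[? ?] := yb h; have /andP[? ?] := yb' h; by right; split.
Qed.

Lemma alt (R : realType) (p0 kx kw ky kw' : R) :
  0 <= p0 < 4 -> 0 <= kx < 4 -> 0 <= kw < 4 -> 0 <= ky < 4 -> 0 <= kw' < 4 ->
  kx < kw -> kw < ky -> ky < kw' ->
  GBc (md (kx - p0)) (md (kw - p0)) -> GBc (md (kx - p0)) (md (kw' - p0)) ->
  GBc (md (ky - p0)) (md (kw - p0)) -> GBc (md (ky - p0)) (md (kw' - p0)) -> False.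
Proof.
move=> /andP[r1 r2] /andP[r3 r4] /andP[r5 r6] /andP[r7 r8] /andP[r9 r10] o1 o2 o3 g1 g2 g3 g4.
have [Cx Cy] := GBc_split g1 g2 g3 g4; clear g1 g2 g3 g4.
move: Cx Cy.
have [h1|h1] := lerP p0 kx.
  have -> : md (kx - p0) = kx - p0 by apply: md_nn; lra.
  have -> : md (kw - p0) = kw - p0 by apply: md_nn; lra.
  have -> : md (ky - p0) = ky - p0 by apply: md_nn; lra.
  have -> : md (kw' - p0) = kw' - p0 by apply: md_nn; lra.
  by move=> Cx Cy; case: Cx => [[? ? ?]|[? ? ? ? ?]]; case: Cy => [[? ? ?]|[? ? ? ? ?]]; lra.
have [h2|h2] := lerP p0 kw.
  have -> : md (kx - p0) = kx - p0 + 4 by apply: md_neg; lra.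
  have -> : md (kw - p0) = kw - p0 by apply: md_nn; lra.
  have -> : md (ky - p0) = ky - p0 by apply: md_nn; lra.
  have -> : md (kw' - p0) = kw' - p0 by apply: md_nn; lra.
  by move=> Cx Cy; case: Cx => [[? ? ?]|[? ? ? ? ?]]; case: Cy => [[? ? ?]|[? ? ? ? ?]]; lra.
have [h3|h3] := lerP p0 ky.
  have -> : md (kx - p0) = kx - p0 + 4 by apply: md_neg; lra.
  have -> : md (kw - p0) = kw - p0 + 4 by apply: md_neg; lra.
  have -> : md (ky - p0) = ky - p0 by apply: md_nn; lra.
  have -> : md (kw' - p0) = kw' - p0 by apply: md_nn; lra.
  by move=> Cx Cy; case: Cx => [[? ? ?]|[? ? ? ? ?]]; case: Cy => [[? ? ?]|[? ? ? ? ?]]; lra.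
have [h4|h4] := lerP p0 kw'.
  have -> : md (kx - p0) = kx - p0 + 4 by apply: md_neg; lra.
  have -> : md (kw - p0) = kw - p0 + 4 by apply: md_neg; lra.
  have -> : md (ky - p0) = ky - p0 + 4 by apply: md_neg; lra.
  have -> : md (kw' - p0) = kw' - p0 by apply: md_nn; lra.
  by move=> Cx Cy; case: Cx => [[? ? ?]|[? ? ? ? ?]]; case: Cy => [[? ? ?]|[? ? ? ? ?]]; lra.
have -> : md (kx - p0) = kx - p0 + 4 by apply: md_neg; lra.
have -> : md (kw - p0) = kw - p0 + 4 by apply: md_neg; lra.
have -> : md (ky - p0) = ky - p0 + 4 by apply: md_neg; lra.
have -> : md (kw' - p0) = kw' - p0 + 4 by apply: md_neg; lra.
by move=> Cx Cy; case: Cx => [[? ? ?]|[? ? ? ? ?]]; case: Cy => [[? ? ?]|[? ? ? ? ?]]; lra.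
Qed.

Definition pb (P : Prop) : bool := if excluded_middle_informative P then true else false.
Lemma pbP (P : Prop) : reflect P (pb P).
Proof. by rewrite /pb; case: excluded_middle_informative => h; constructor. Qed.

Lemma fmin (R : realType) (K : choiceType) (f : K -> R) (F : {fset K}) :
  F != fset0 -> exists2 w, w \in F & forall w', w' \in F -> f w <= f w'.
Proof.
elim/fset1U_rect: F => [|x X xX IH]; first by rewrite eqxx.
move=> _; have [E|ne] := eqVneq (X : {fset K}) fset0.
  exists x; first by rewrite in_fset1U eqxx.
  by move=> w'; rewrite E fsetU0 in_fset1 => /eqP ->.
have [w wX wm] := IH ne.
have [le|lt] := lerP (f x) (f w).
  exists x; first by rewrite in_fset1U eqxx.
  move=> w'; rewrite in_fset1U => /orP[/eqP->//|/wm]; exact: le_trans.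
exists w; first by rewrite in_fset1U wX orbT.
move=> w'; rewrite in_fset1U => /orP[/eqP->|/wm //]; exact: ltW.
Qed.



Definition cnt (R : realType) (K : choiceType) (D : {fset K}) (kf : K -> R) (e : K) : nat :=
  #|` [fset e' in D | kf e' < kf e]|.

Lemma succ_count (R : realType) (K : choiceType) (D : {fset K}) (kf : K -> R) (x w : K) :
  x \in D -> kf x < kf w ->
  (forall e', e' \in D -> kf x < kf e' -> kf w <= kf e') ->
  (forall e', e' \in D -> kf e' = kf x -> e' = x) ->
  cnt D kf w = (cnt D kf x).+1.
Proof.
move=> xD xw mn inj; rewrite /cnt.
have -> : [fset e' in D | kf e' < kf w] = x |` [fset e' in D | kf e' < kf x].
  apply/fsetP => e; rewrite !inE.
  have [-> | ne] := eqVneq e x; first by rewrite xD xw.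
  rewrite /=; case eD : (e \in D) => //=.
  have [lt|ge] := ltrP (kf e) (kf x); first by rewrite (lt_trans lt xw).
  rewrite le_eqVlt in ge; case/orP: ge => [/eqP/esym h|h].
    by move: ne; rewrite (inj e eD h) eqxx.
  by have := mn e eD h; rewrite leNgt => /negbTE ->.
by rewrite cardfsU1 !inE ltxx andbF.
Qed.

Lemma between (R : realType) (K : choiceType) (D : {fset K}) (kf : K -> R) (x y : K) :
  x \in D -> y \in D -> kf x < kf y ->
  (forall e' e'', e' \in D -> e'' \in D -> kf e' = kf e'' -> e' = e'') ->
  cnt D kf y = (cnt D kf x).+1 \/
  exists w, [/\ w \in D, kf x < kf w, kf w < kf y & cnt D kf w = (cnt D kf x).+1].
Proof.
move=> xD yD xy inj.
have inj' : forall e', e' \in D -> kf e' = kf x -> e' = x by move=> e' e'D h; apply: inj.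
set F := [fset e in D | (kf x < kf e) && (kf e < kf y)].
have [E|ne] := eqVneq F fset0.
  left; apply: succ_count => // e eD h; rewrite leNgt; apply/negP => h'.
  have : e \in F by rewrite !inE eD h h'.
  by rewrite E in_fset0.
right; have [w wF wm] := fmin kf ne.
move: (wF); rewrite !inE => /andP[wD /andP[h1 h2]].
exists w; split => //; apply: succ_count => // e eD h.
have [h3|h3] := ltrP (kf e) (kf y).
  by apply: wm; rewrite !inE eD h h3.
exact: ltW (lt_le_trans h2 h3).
Qed.

Definition DE (R : realType) (S : {fset (R * R)}) : {fset {fset (R * R)}} :=
  [fset e in fpowerset S | pb (delaunay_edge S e)].

Lemma DEP (R : realType) (S e : {fset (R * R)}) : (e \in DE S) = pb (delaunay_edge S e).
Proof.
rewrite /DE !inE fpowersetE /=; case: (pbP (delaunay_edge S e)) => [[s _]|_]; last by rewrite andbF.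
by rewrite s.
Qed.

Lemma DE_de (R : realType) (S e : {fset (R * R)}) : e \in DE S -> delaunay_edge S e.
Proof. by rewrite DEP => /pbP. Qed.
Lemma de_DE (R : realType) (S e : {fset (R * R)}) : delaunay_edge S e -> e \in DE S.
Proof. by rewrite DEP => h; apply/pbP. Qed.

Definition colr (R : realType) (S : {fset (R * R)}) (e : {fset (R * R)}) : bool :=
  odd (cnt (DE S) (key S) e).

Lemma core (R : realType) (S : {fset (R * R)}) (a b c : R) (x y z : {fset (R * R)}) :
  (a, b) != (0, 0) ->
  (forall e e', delaunay_edge S e -> delaunay_edge S e' -> hp_contains a b c e ->
     hp_contains a b c e' -> colr S e = colr S e') ->
  delaunay_edge S x -> delaunay_edge S y -> delaunay_edge S z ->
  hp_contains a b c x -> hp_contains a b c y -> hp_contains a b c z ->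
  key S x < key S y -> key S y < key S z -> False.
Proof.
move=> n0 same dx dy dz hx hy hz xy yz.
have inj : forall e' e'', e' \in DE S -> e'' \in DE S -> key S e' = key S e'' -> e' = e''.
  by move=> e' e'' /DE_de h1 /DE_de h2; apply: key_inj.
have step : forall u v, delaunay_edge S u -> delaunay_edge S v -> hp_contains a b c u ->
    hp_contains a b c v -> key S u < key S v ->
    exists w, [/\ delaunay_edge S w, ~ hp_contains a b c w, key S u < key S w & key S w < key S v].
  move=> u v du dv hu hv uv.
  case: (between (de_DE du) (de_DE dv) uv inj) => [E|[w [wD h1 h2 E]]].
    by have := same u v du dv hu hv; rewrite /colr E /=; by case: (odd _).
  exists w; split => //; first exact: DE_de.
  move=> hw; have := same u w du (DE_de wD) hu hw.
  by rewrite /colr E /=; by case: (odd _).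
have [w [dw hw xw wy]] := step x y dx dy hx hy xy.
have [w' [dw' hw' yw' w'z]] := step y z dy dz hy hz yz.
have rng : forall e, delaunay_edge S e -> 0 <= key S e < 4.
  by move=> e de; rewrite /key; apply: PA_range; case: (rep_spec de).
apply: (@alt R (PA (a, b)) (key S x) (key S w) (key S y) (key S w')).
- exact: PA_range.
- exact: rng.
- exact: rng.
- exact: rng.
- exact: rng.
- done.
- done.
- done.
- exact: GB n0 dx dw hx hw.
- exact: GB n0 dx dw' hx hw'.
- exact: GB n0 dy dw hy hw.
- exact: GB n0 dy dw' hy hw'.
Qed.

Lemma part1 (R : realType) :
  (forall S : {fset (R * R)},
     exists col : {fset (R * R)} -> bool,
       forall a b c : R, is_halfplane a b c ->
         (exists e1 e2 e3 : {fset (R * R)},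
            [/\ delaunay_edge S e1, delaunay_edge S e2, delaunay_edge S e3,
                [/\ hp_contains a b c e1, hp_contains a b c e2
                    & hp_contains a b c e3] &
                [/\ e1 != e2, e1 != e3 & e2 != e3]]) ->
         exists e e' : {fset (R * R)},
           [/\ delaunay_edge S e, delaunay_edge S e', hp_contains a b c e,
               hp_contains a b c e' & col e != col e']).
Proof.
move=> S; exists (colr S) => a b c hp [e1 [e2 [e3 [d1 d2 d3 [h1 h2 h3] [n12 n13 n23]]]]].
apply: NNPP => Hno.
have same : forall e e', delaunay_edge S e -> delaunay_edge S e' -> hp_contains a b c e ->
     hp_contains a b c e' -> colr S e = colr S e'.
  move=> e e' de de' he he'; apply/eqP; apply: contraT => ne; exfalso.
  by apply: Hno; exists e, e'; split.
have K : forall u v, delaunay_edge S u -> delaunay_edge S v -> u != v -> key S u != key S v.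
  by move=> u v du dv; apply: contra => /eqP /(key_inj du dv) ->.
have k12 := K _ _ d1 d2 n12; have k13 := K _ _ d1 d3 n13; have k23 := K _ _ d2 d3 n23.
have C := core hp same.
case: (ltrgtP (key S e1) (key S e2)) k12 => // l12 _;
case: (ltrgtP (key S e1) (key S e3)) k13 => // l13 _;
case: (ltrgtP (key S e2) (key S e3)) k23 => // l23 _.
- exact: C d1 d2 d3 h1 h2 h3 l12 l23.
- exact: C d1 d3 d2 h1 h3 h2 l13 l23.
- by move: (lt_trans l12 l23); rewrite ltNge (ltW l13).
- exact: C d3 d1 d2 h3 h1 h2 l13 l12.
- exact: C d2 d1 d3 h2 h1 h3 l12 l13.
- by move: (lt_trans l12 l13); rewrite ltNge (ltW l23).
- exact: C d2 d3 d1 h2 h3 h1 l23 l13.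
- exact: C d3 d2 d1 h3 h2 h1 l23 l12.
Qed.

Definition q0 (R : realType) : R * R := (0, 0).
Definition q1 (R : realType) : R * R := (2, 0).
Definition q2 (R : realType) : R * R := (3, 2).
Definition q3 (R : realType) : R * R := (1, 3).
Definition q4 (R : realType) : R * R := (-1, 2).
Definition S5 (R : realType) : {fset (R * R)} := [fset q0 R; q1 R; q2 R; q3 R; q4 R].

Ltac decide_bools :=
  repeat match goal with
  | |- context [(?x == ?y)] =>
      first [ rewrite (_ : (x == y) = true); last (by apply/eqP; lra)
            | rewrite (_ : (x == y) = false); last (by apply: negbTE; apply/eqP => ?; lra) ]
  | |- context [(?x <= ?y)] =>
      first [ rewrite (_ : (x <= y) = true); last (by lra)
            | rewrite (_ : (x <= y) = false); last (by apply: negbTE; rewrite -ltNge; lra) ]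
  end.

Lemma S5P (R : realType) (x : R * R) :
  x \in S5 R -> x = q0 R \/ x = q1 R \/ x = q2 R \/ x = q3 R \/ x = q4 R.
Proof.
rewrite /S5 !inE => /orP[/orP[/orP[/orP[|]|]|]|] /eqP ->;
  by [left|right;left|right;right;left|right;right;right;left|right;right;right;right].
Qed.

Lemma side_de (R : realType) (u v : R * R) (a b c : R) :
  u \in S5 R -> v \in S5 R -> u != v -> (a, b) != (0,0) ->
  (forall x, x \in S5 R -> (x \in [fset u; v]) = in_hp a b c x) ->
  delaunay_edge (S5 R) [fset u; v].
Proof.
move=> uS vS uv nz h; split; last split.
- by apply/fsubsetP => x; rewrite in_fset2 => /orP[] /eqP ->.
- by rewrite cardfs2 uv.
- by exists a, b, c; split.
Qed.

Ltac memS := rewrite /S5 !inE /q0 /q1 /q2 /q3 /q4 ?xpair_eqE; decide_bools; done.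

Lemma E0 (R : realType) : delaunay_edge (S5 R) [fset q0 R; q1 R].
Proof.
apply: (@side_de R _ _ (0) (1) (1)).
- memS.
- memS.
- rewrite /q0 /q1 /q2 /q3 /q4 xpair_eqE; decide_bools; done.
- rewrite xpair_eqE; decide_bools; done.
- move=> x /S5P [->|[->|[->|[->|->]]]]; rewrite /in_hp /q0 /q1 /q2 /q3 /q4 in_fset2 /= !xpair_eqE; decide_bools; done.
Qed.

Lemma E1 (R : realType) : delaunay_edge (S5 R) [fset q1 R; q2 R].
Proof.
apply: (@side_de R _ _ (-2) (1) (-3)).
- memS.
- memS.
- rewrite /q0 /q1 /q2 /q3 /q4 xpair_eqE; decide_bools; done.
- rewrite xpair_eqE; decide_bools; done.
- move=> x /S5P [->|[->|[->|[->|->]]]]; rewrite /in_hp /q0 /q1 /q2 /q3 /q4 in_fset2 /= !xpair_eqE; decide_bools; done.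
Qed.

Lemma E2 (R : realType) : delaunay_edge (S5 R) [fset q2 R; q3 R].
Proof.
apply: (@side_de R _ _ (-1) (-2) (-5)).
- memS.
- memS.
- rewrite /q0 /q1 /q2 /q3 /q4 xpair_eqE; decide_bools; done.
- rewrite xpair_eqE; decide_bools; done.
- move=> x /S5P [->|[->|[->|[->|->]]]]; rewrite /in_hp /q0 /q1 /q2 /q3 /q4 in_fset2 /= !xpair_eqE; decide_bools; done.
Qed.

Lemma E3 (R : realType) : delaunay_edge (S5 R) [fset q3 R; q4 R].
Proof.
apply: (@side_de R _ _ (1) (-2) (-3)).
- memS.
- memS.
- rewrite /q0 /q1 /q2 /q3 /q4 xpair_eqE; decide_bools; done.
- rewrite xpair_eqE; decide_bools; done.
- move=> x /S5P [->|[->|[->|[->|->]]]]; rewrite /in_hp /q0 /q1 /q2 /q3 /q4 in_fset2 /= !xpair_eqE; decide_bools; done.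
Qed.

Lemma E4 (R : realType) : delaunay_edge (S5 R) [fset q4 R; q0 R].
Proof.
apply: (@side_de R _ _ (2) (1) (1)).
- memS.
- memS.
- rewrite /q0 /q1 /q2 /q3 /q4 xpair_eqE; decide_bools; done.
- rewrite xpair_eqE; decide_bools; done.
- move=> x /S5P [->|[->|[->|[->|->]]]]; rewrite /in_hp /q0 /q1 /q2 /q3 /q4 in_fset2 /= !xpair_eqE; decide_bools; done.
Qed.

Lemma D0 (R : realType) : ~ delaunay_edge (S5 R) [fset q4 R; q1 R].
Proof.
move=> [_ [_ [a [b [c [_ h]]]]]].
have h0 := h (q0 R) (ltac:(memS)); have h1 := h (q1 R) (ltac:(memS));
have h2 := h (q2 R) (ltac:(memS)); have h3 := h (q3 R) (ltac:(memS));
have h4 := h (q4 R) (ltac:(memS)).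
move: h0 h1 h2 h3 h4; rewrite /in_hp /q0 /q1 /q2 /q3 /q4 !in_fset2 /= !xpair_eqE; decide_bools.
move=> /esym h0 /esym h1 /esym h2 /esym h3 /esym h4.
move: h0 h1 h2 h3 h4; rewrite -?ltNge; move=> *; lra.
Qed.

Lemma D1 (R : realType) : ~ delaunay_edge (S5 R) [fset q0 R; q2 R].
Proof.
move=> [_ [_ [a [b [c [_ h]]]]]].
have h0 := h (q0 R) (ltac:(memS)); have h1 := h (q1 R) (ltac:(memS));
have h2 := h (q2 R) (ltac:(memS)); have h3 := h (q3 R) (ltac:(memS));
have h4 := h (q4 R) (ltac:(memS)).
move: h0 h1 h2 h3 h4; rewrite /in_hp /q0 /q1 /q2 /q3 /q4 !in_fset2 /= !xpair_eqE; decide_bools.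
move=> /esym h0 /esym h1 /esym h2 /esym h3 /esym h4.
move: h0 h1 h2 h3 h4; rewrite -?ltNge; move=> *; lra.
Qed.

Lemma D2 (R : realType) : ~ delaunay_edge (S5 R) [fset q1 R; q3 R].
Proof.
move=> [_ [_ [a [b [c [_ h]]]]]].
have h0 := h (q0 R) (ltac:(memS)); have h1 := h (q1 R) (ltac:(memS));
have h2 := h (q2 R) (ltac:(memS)); have h3 := h (q3 R) (ltac:(memS));
have h4 := h (q4 R) (ltac:(memS)).
move: h0 h1 h2 h3 h4; rewrite /in_hp /q0 /q1 /q2 /q3 /q4 !in_fset2 /= !xpair_eqE; decide_bools.
move=> /esym h0 /esym h1 /esym h2 /esym h3 /esym h4.
move: h0 h1 h2 h3 h4; rewrite -?ltNge; move=> *; lra.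
Qed.

Lemma D3 (R : realType) : ~ delaunay_edge (S5 R) [fset q2 R; q4 R].
Proof.
move=> [_ [_ [a [b [c [_ h]]]]]].
have h0 := h (q0 R) (ltac:(memS)); have h1 := h (q1 R) (ltac:(memS));
have h2 := h (q2 R) (ltac:(memS)); have h3 := h (q3 R) (ltac:(memS));
have h4 := h (q4 R) (ltac:(memS)).
move: h0 h1 h2 h3 h4; rewrite /in_hp /q0 /q1 /q2 /q3 /q4 !in_fset2 /= !xpair_eqE; decide_bools.
move=> /esym h0 /esym h1 /esym h2 /esym h3 /esym h4.
move: h0 h1 h2 h3 h4; rewrite -?ltNge; move=> *; lra.
Qed.

Lemma D4 (R : realType) : ~ delaunay_edge (S5 R) [fset q3 R; q0 R].
Proof.
move=> [_ [_ [a [b [c [_ h]]]]]].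
have h0 := h (q0 R) (ltac:(memS)); have h1 := h (q1 R) (ltac:(memS));
have h2 := h (q2 R) (ltac:(memS)); have h3 := h (q3 R) (ltac:(memS));
have h4 := h (q4 R) (ltac:(memS)).
move: h0 h1 h2 h3 h4; rewrite /in_hp /q0 /q1 /q2 /q3 /q4 !in_fset2 /= !xpair_eqE; decide_bools.
move=> /esym h0 /esym h1 /esym h2 /esym h3 /esym h4.
move: h0 h1 h2 h3 h4; rewrite -?ltNge; move=> *; lra.
Qed.

Lemma card2E (R : realType) (e : {fset (R * R)}) : #|` e| = 2%N ->
  exists x y, [/\ x != y, x \in e, y \in e & e = [fset x; y]].
Proof.
move=> c; have [E|[x xe]] := fset_0Vmem e; first by move: c; rewrite E cardfs0.
have c1 : #|` e `\ x| = 1%N by move: c; rewrite (cardfsD1 x) xe /= add1n => -[].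
have /cardfs1P [y Ey] : #|` e `\ x| == 1%N by rewrite c1.
have ye : y \in e `\ x by rewrite Ey in_fset1.
move: (ye); rewrite in_fsetD1 => /andP[yx ye'].
exists x, y; split => //; first by rewrite eq_sym.
by rewrite -(fsetD1K xe) Ey.
Qed.

Lemma tri (R : realType) (a b c : R) (u v w : R * R) :
  (forall x, x \in S5 R -> in_hp a b c x -> [\/ x = u, x = v | x = w]) ->
  ~ delaunay_edge (S5 R) [fset u; w] ->
  forall e, delaunay_edge (S5 R) e -> hp_contains a b c e ->
  e = [fset u; v] \/ e = [fset v; w].
Proof.
move=> hS nd e de he.
have [x [y [xy xe ye E]]] := card2E (proj1 (proj2 de)).
have sub : forall z, z \in e -> z \in S5 R by case: de => /fsubsetP s _.
have hx := hS x (sub x xe) (he x xe); have hy := hS y (sub y ye) (he y ye).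
case: hx => ?; case: hy => ?; subst x y; rewrite E;
  first [ by move: xy; rewrite eqxx | by left | by right | by left; rewrite fsetUC
        | by right; rewrite fsetUC | by exfalso; apply: nd; rewrite -E
        | by exfalso; apply: nd; rewrite fsetUC -E ].
Qed.
Lemma T0 (R : realType) : forall e, delaunay_edge (S5 R) e -> hp_contains (1) (2) (4) e ->
  e = [fset q4 R; q0 R] \/ e = [fset q0 R; q1 R].
Proof.
apply: tri; last exact: D0.
move=> x /S5P [->|[->|[->|[->|->]]]] h; move: h; rewrite /in_hp /q0 /q1 /q2 /q3 /q4 /=; decide_bools; move=> h;
  by [|constructor 1|constructor 2|constructor 3].
Qed.

Lemma T1 (R : realType) : forall e, delaunay_edge (S5 R) e -> hp_contains (-1) (2) (2) e ->
  e = [fset q0 R; q1 R] \/ e = [fset q1 R; q2 R].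
Proof.
apply: tri; last exact: D1.
move=> x /S5P [->|[->|[->|[->|->]]]] h; move: h; rewrite /in_hp /q0 /q1 /q2 /q3 /q4 /=; decide_bools; move=> h;
  by [|constructor 1|constructor 2|constructor 3].
Qed.

Lemma T2 (R : realType) : forall e, delaunay_edge (S5 R) e -> hp_contains (-2) (-1) (-2) e ->
  e = [fset q1 R; q2 R] \/ e = [fset q2 R; q3 R].
Proof.
apply: tri; last exact: D2.
move=> x /S5P [->|[->|[->|[->|->]]]] h; move: h; rewrite /in_hp /q0 /q1 /q2 /q3 /q4 /=; decide_bools; move=> h;
  by [|constructor 1|constructor 2|constructor 3].
Qed.

Lemma T3 (R : realType) : forall e, delaunay_edge (S5 R) e -> hp_contains (0) (-1) (-1) e ->
  e = [fset q2 R; q3 R] \/ e = [fset q3 R; q4 R].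
Proof.
apply: tri; last exact: D3.
move=> x /S5P [->|[->|[->|[->|->]]]] h; move: h; rewrite /in_hp /q0 /q1 /q2 /q3 /q4 /=; decide_bools; move=> h;
  by [|constructor 1|constructor 2|constructor 3].
Qed.

Lemma T4 (R : realType) : forall e, delaunay_edge (S5 R) e -> hp_contains (2) (-1) (2) e ->
  e = [fset q3 R; q4 R] \/ e = [fset q4 R; q0 R].
Proof.
apply: tri; last exact: D4.
move=> x /S5P [->|[->|[->|[->|->]]]] h; move: h; rewrite /in_hp /q0 /q1 /q2 /q3 /q4 /=; decide_bools; move=> h;
  by [|constructor 1|constructor 2|constructor 3].
Qed.

Ltac hpin := move=> x; rewrite in_fset2 => /orP[] /eqP ->; rewrite /in_hp /q0 /q1 /q2 /q3 /q4 /=; decide_bools; done.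

Lemma part2 (R : realType) :
  (exists S : {fset (R * R)},
     forall col : {fset (R * R)} -> bool,
       exists a b c : R, is_halfplane a b c /\
         (exists e1 e2 : {fset (R * R)},
            [/\ delaunay_edge S e1, delaunay_edge S e2, hp_contains a b c e1,
                hp_contains a b c e2 & e1 != e2]) /\
         (forall e e' : {fset (R * R)},
            delaunay_edge S e -> delaunay_edge S e' ->
            hp_contains a b c e -> hp_contains a b c e' -> col e = col e')).
Proof.
exists (S5 R) => col.
have : [|| col [fset q0 R; q1 R] == col [fset q1 R; q2 R], col [fset q1 R; q2 R] == col [fset q2 R; q3 R],
          col [fset q2 R; q3 R] == col [fset q3 R; q4 R], col [fset q3 R; q4 R] == col [fset q4 R; q0 R]
        | col [fset q4 R; q0 R] == col [fset q0 R; q1 R]].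
  by case: (col [fset q0 R; q1 R]); case: (col [fset q1 R; q2 R]); case: (col [fset q2 R; q3 R]);
     case: (col [fset q3 R; q4 R]); case: (col [fset q4 R; q0 R]).
case/orP => [h|/orP[h|/orP[h|/orP[h|h]]]].
- exists (-1), (2), (2); split; first by rewrite /is_halfplane xpair_eqE; decide_bools.
  split.
  + exists [fset q0 R; q1 R], [fset q1 R; q2 R]; split; [exact: E0|exact: E1|hpin|hpin|].
    apply/eqP => E; have h1 : q0 R \in [fset q0 R; q1 R] by rewrite in_fset2 eqxx.
    move: h1; rewrite E in_fset2 /q0 /q1 /q2 /q3 /q4 !xpair_eqE; clear E h; by decide_bools.
  + move=> e e' de de' he he'.
    by case: (T1 de he) => ->; case: (T1 de' he') => ->; rewrite // (eqP h).
- exists (-2), (-1), (-2); split; first by rewrite /is_halfplane xpair_eqE; decide_bools.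
  split.
  + exists [fset q1 R; q2 R], [fset q2 R; q3 R]; split; [exact: E1|exact: E2|hpin|hpin|].
    apply/eqP => E; have h1 : q1 R \in [fset q1 R; q2 R] by rewrite in_fset2 eqxx.
    move: h1; rewrite E in_fset2 /q0 /q1 /q2 /q3 /q4 !xpair_eqE; clear E h; by decide_bools.
  + move=> e e' de de' he he'.
    by case: (T2 de he) => ->; case: (T2 de' he') => ->; rewrite // (eqP h).
- exists (0), (-1), (-1); split; first by rewrite /is_halfplane xpair_eqE; decide_bools.
  split.
  + exists [fset q2 R; q3 R], [fset q3 R; q4 R]; split; [exact: E2|exact: E3|hpin|hpin|].
    apply/eqP => E; have h1 : q2 R \in [fset q2 R; q3 R] by rewrite in_fset2 eqxx.
    move: h1; rewrite E in_fset2 /q0 /q1 /q2 /q3 /q4 !xpair_eqE; clear E h; by decide_bools.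
  + move=> e e' de de' he he'.
    by case: (T3 de he) => ->; case: (T3 de' he') => ->; rewrite // (eqP h).
- exists (2), (-1), (2); split; first by rewrite /is_halfplane xpair_eqE; decide_bools.
  split.
  + exists [fset q3 R; q4 R], [fset q4 R; q0 R]; split; [exact: E3|exact: E4|hpin|hpin|].
    apply/eqP => E; have h1 : q3 R \in [fset q3 R; q4 R] by rewrite in_fset2 eqxx.
    move: h1; rewrite E in_fset2 /q0 /q1 /q2 /q3 /q4 !xpair_eqE; clear E h; by decide_bools.
  + move=> e e' de de' he he'.
    by case: (T4 de he) => ->; case: (T4 de' he') => ->; rewrite // (eqP h).
- exists (1), (2), (4); split; first by rewrite /is_halfplane xpair_eqE; decide_bools.
  split.
  + exists [fset q4 R; q0 R], [fset q0 R; q1 R]; split; [exact: E4|exact: E0|hpin|hpin|].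
    apply/eqP => E; have h1 : q4 R \in [fset q4 R; q0 R] by rewrite in_fset2 eqxx.
    move: h1; rewrite E in_fset2 /q0 /q1 /q2 /q3 /q4 !xpair_eqE; clear E h; by decide_bools.
  + move=> e e' de de' he he'.
    by case: (T0 de he) => ->; case: (T0 de' he') => ->; rewrite // (eqP h).
Qed.

Unset Implicit Arguments.

Theorem theorem2 (R : realType) :
  (forall S : {fset (R * R)},
     exists col : {fset (R * R)} -> bool,
       forall a b c : R, is_halfplane a b c ->
         (exists e1 e2 e3 : {fset (R * R)},
            [/\ delaunay_edge S e1, delaunay_edge S e2, delaunay_edge S e3,
                [/\ hp_contains a b c e1, hp_contains a b c e2
                    & hp_contains a b c e3] &
                [/\ e1 != e2, e1 != e3 & e2 != e3]]) ->
         exists e e' : {fset (R * R)},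
           [/\ delaunay_edge S e, delaunay_edge S e', hp_contains a b c e,
               hp_contains a b c e' & col e != col e'])
  /\
  (exists S : {fset (R * R)},
     forall col : {fset (R * R)} -> bool,
       exists a b c : R, is_halfplane a b c /\
         (exists e1 e2 : {fset (R * R)},
            [/\ delaunay_edge S e1, delaunay_edge S e2, hp_contains a b c e1,
                hp_contains a b c e2 & e1 != e2]) /\
         (forall e e' : {fset (R * R)},
            delaunay_edge S e -> delaunay_edge S e' ->
            hp_contains a b c e -> hp_contains a b c e' -> col e = col e')).
Proof.
split; [exact: part1 | exact: part2].
Qed.
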